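(* For real $c>4$, \[ Z(s,x+x^{-1}+y+y^{-1}+c) = c^s \sum_{j=0}^\infty \binom{s}{2j} \frac{1}{c^{2j}} \binom{2j}{j}^2 = c^s\, {}_3F_2\left(\left.\begin{array}{c} -\frac{s}{2}, \frac{1-s}{2}, \frac12 \\ 1,1 \end{array}\right| \frac{16}{c^2}\right). \]
   Context: For a nonzero Laurent polynomial $P\in\mathbb{C}[x_1^{\pm1},\dots,x_n^{\pm1}]$, the zeta Mahler measure is $Z(s,P)=\int_0^1\cdots\int_0^1 \left|P(\mathrm{e}^{2\pi i\theta_1},\dots,\mathrm{e}^{2\pi i\theta_n})\right|^s \,\mathrm{d}\theta_1\cdots\mathrm{d}\theta_n$. The generalized hypergeometric series is ${}_3F_2\left(\left.\begin{array}{c} a_1,a_2,a_3 \\ b_1,b_2 \end{array}\right| z\right)=\sum_{j=0}^\infty \frac{(a_1)_j(a_2)_j(a_3)_j}{(b_1)_j(b_2)_j\, j!}z^j$, with Pochhammer symbol $(a)_j=a(a+1)\cdots(a+j-1)$. *)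

(* Defs.v *)
From Stdlib Require Import Reals Factorial.
From Coquelicot Require Import Coquelicot.
Open Scope R_scope.

Definition cexp (z : C) : C :=
  (exp (Re z) * cos (Im z), exp (Re z) * sin (Im z))%R.

Definition e2pi (t : R) : C := cexp (0%R, (2 * PI * t)%R).

(* a^s for real a >= 0 and complex s, principal branch: exp(s ln a); 0^s := 0 *)
Definition rpowC (a : R) (s : C) : C :=
  if Rlt_dec 0 a then cexp (Cmult s (RtoC (ln a))) else RtoC 0.

(* Zeta Mahler measure of a two-variable Laurent polynomial (given as a function on
   (C minus 0)^2), with the integral over [0,1]^2 written as an iterated Riemann integral *)
Definition zeta_mahler2 (P : C -> C -> C) (s : C) : C :=
  RInt (V := C_R_CompleteNormedModule)
    (fun t1 => RInt (V := C_R_CompleteNormedModule)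
       (fun t2 => rpowC (Cmod (P (e2pi t1) (e2pi t2))) s) 0 1) 0 1.

Definition Pc (c : R) (x y : C) : C :=
  Cplus (Cplus (Cplus (Cplus x (Cinv x)) y) (Cinv y)) (RtoC c).

Fixpoint poch (a : C) (j : nat) : C :=
  match j with
  | O => RtoC 1
  | S k => Cmult (poch a k) (Cplus a (RtoC (INR k)))
  end.

Fixpoint cbinom_num (s : C) (n : nat) : C :=
  match n with
  | O => RtoC 1
  | S k => Cmult (cbinom_num s k) (Cminus s (RtoC (INR k)))
  end.
Definition cbinom (s : C) (n : nat) : C := Cdiv (cbinom_num s n) (RtoC (INR (fact n))).

Definition F32_term (a1 a2 a3 b1 b2 z : C) (j : nat) : C :=
  Cmult (Cdiv (Cmult (Cmult (poch a1 j) (poch a2 j)) (poch a3 j))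
              (Cmult (Cmult (poch b1 j) (poch b2 j)) (RtoC (INR (fact j)))))
        (Cpow z j).

(* Main.v *)
Require Import Defs.
From Stdlib Require Import Reals Lra Lia Psatz Factorial.
From Coquelicot Require Import Coquelicot.
Open Scope R_scope.

Definition cs (t:R) := cos (2*PI*t).

Lemma cos_mom_step k J : is_RInt (fun t => cs t ^ k) 0 1 J ->
  is_RInt (fun t => cs t ^ (S (S k))) 0 1 (INR (S k) / INR (S (S k)) * J).
Proof.
  intros HJ.
  set (f := fun t => sin (2*PI*t) * cs t ^ (S k)).
  set (df := fun t => 2*PI*(INR (S (S k)) * cs t ^ (S (S k)) - INR (S k) * cs t ^ k)).
  assert (H1 : is_RInt df 0 1 (minus (f 1) (f 0))).
  { apply (is_RInt_derive (V:=R_CompleteNormedModule) f df).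
    + intros x _. unfold f, df, cs. auto_derive. auto.
      change (match k with 0%nat => 1 | S _ => INR k + 1 end) with (INR (S k)).
      replace (cos (2*PI*x) ^ S (S k)) with (cos(2*PI*x)*(cos(2*PI*x)*cos(2*PI*x)^k)) by (simpl; ring).
      assert (E := sin2 (2*PI*x)). unfold Rsqr in E.
      set (co := cos (2*PI*x)) in *. set (si := sin (2*PI*x)) in *.
      replace (si * (2*PI*1* - si * (INR(S k) * co ^ k))) with (-(2*PI*INR(S k)*co^k) * (si*si)) by ring.
      rewrite E. rewrite !S_INR. ring.
    + intros x _. apply (ex_derive_continuous (K:=R_AbsRing) (V:=R_NormedModule) df x).
      unfold df, cs. auto_derive. auto. }
  assert (Hf : minus (f 1) (f 0) = 0).
  { unfold f, minus, plus, opp; simpl. rewrite Rmult_0_r, Rmult_1_r, sin_0, sin_2PI. ring. }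
  rewrite Hf in H1.
  assert (H2 := is_RInt_scal _ _ _ (2*PI*INR (S k)) _ HJ).
  assert (H3 := is_RInt_plus _ _ _ _ _ _ H1 H2).
  assert (H4 := is_RInt_scal _ _ _ (/ (2*PI*INR (S (S k)))) _ H3).
  assert (PI0 := PI_RGT_0).
  assert (K0 : INR (S (S k)) <> 0) by (apply not_0_INR; lia).
  replace (INR (S k) / INR (S (S k)) * J) with (scal (/ (2*PI*INR (S (S k)))) (plus 0 (scal (2*PI*INR (S k)) J))).
  - eapply is_RInt_ext; [|exact H4].
    intros x _. unfold df, plus, scal; simpl. unfold mult; simpl. field; repeat split; try lra; auto.
  - unfold plus, scal; simpl. unfold mult; simpl. field; repeat split; try lra; auto.
Qed.

Definition cb (j : nat) := INR (fact (2*j)) / (INR (fact j) * INR (fact j)).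

Lemma cb_S j : cb (S j) = cb j * (2 * (2 * INR j + 1) / (INR j + 1)).
Proof.
  unfold cb. replace (2 * S j)%nat with (S (S (2*j)))%nat by lia.
  rewrite !fact_simpl. rewrite !mult_INR, !S_INR, mult_INR. simpl (INR 2).
  assert (H1 := INR_fact_neq_0 (2*j)). assert (H2 := INR_fact_neq_0 j).
  assert (0 <= INR j) by apply pos_INR.
  field. repeat split; auto; lra.
Qed.

Lemma is_RInt_val_eq (f:R->R) a b (l l' : R) : is_RInt f a b l -> l = l' -> is_RInt f a b l'.
Proof. intros H E; subst; exact H. Qed.

Lemma J0 : is_RInt (fun t => cs t ^ 0) 0 1 1.
Proof.
  assert (H := is_RInt_const (V:=R_NormedModule) 0 1 1).
  eapply is_RInt_val_eq. eapply is_RInt_ext; [|exact H]. intros; simpl; reflexivity.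
  unfold scal; simpl; unfold mult; simpl; ring.
Qed.

Lemma J1 : is_RInt (fun t => cs t ^ 1) 0 1 0.
Proof.
  set (f := fun t => sin (2*PI*t) / (2*PI)).
  assert (PI0 := PI_RGT_0).
  assert (H : is_RInt (fun t => cs t ^ 1) 0 1 (minus (f 1) (f 0))).
  { apply (is_RInt_derive (V:=R_CompleteNormedModule) f).
    + intros x _. unfold f, cs. auto_derive. auto. field. lra.
    + intros x _. apply (ex_derive_continuous (K:=R_AbsRing) (V:=R_NormedModule)).
      unfold cs. auto_derive. auto. }
  eapply is_RInt_val_eq. exact H.
  unfold f, minus, plus, opp; simpl. rewrite Rmult_0_r, Rmult_1_r, sin_0, sin_2PI. field. lra.
Qed.

Lemma Jeven j : is_RInt (fun t => cs t ^ (2*j)) 0 1 (cb j / 4^j)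
  /\ is_RInt (fun t => cs t ^ (S (2*j))) 0 1 0.
Proof.
  induction j as [|j [IH1 IH2]].
  - split. replace (cb 0 / 4^0) with 1. exact J0. unfold cb; simpl; field.
    exact J1.
  - replace (2 * S j)%nat with (S (S (2*j))) by lia. split.
    + replace (cb (S j) / 4 ^ S j) with (INR (S (2*j)) / INR (S (S (2*j))) * (cb j / 4^j)).
      apply cos_mom_step; exact IH1.
      rewrite cb_S. rewrite !S_INR, mult_INR. simpl (INR 2).
      assert (0 <= INR j) by apply pos_INR. simpl pow. field. repeat split; try lra.
      apply pow_nonzero. lra.
    + eapply is_RInt_val_eq. apply cos_mom_step; exact IH2. ring.
Qed.

Definition mu (k : nat) : R := if Nat.even k then cb (Nat.div2 k) else 0.

Lemma mu_even j : mu (2*j)%nat = cb j.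
Proof. unfold mu. rewrite Nat.even_mul. rewrite Nat.div2_double. reflexivity. Qed.

Lemma mu_odd j : mu (S (2*j))%nat = 0.
Proof. unfold mu. rewrite Nat.even_succ, Nat.odd_mul. reflexivity. Qed.

Lemma mom k : is_RInt (fun t => (2 * cs t) ^ k) 0 1 (mu k).
Proof.
  destruct (Nat.Even_or_Odd k) as [[j Hj]|[j Hj]]; subst k.
  - destruct (Jeven j) as [H _].
    rewrite mu_even. eapply is_RInt_val_eq.
    eapply is_RInt_ext; [|exact (is_RInt_scal _ _ _ (2^(2*j)) _ H)].
    intros x _. rewrite Rpow_mult_distr. reflexivity.
    assert (E : 2^(2*j) = 4^j) by (rewrite pow_mult; f_equal; ring).
    rewrite E. unfold scal; simpl; unfold mult; simpl. field.
    apply pow_nonzero; lra.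
  - destruct (Jeven j) as [_ H].
    replace (2*j+1)%nat with (S (2*j)) by lia. rewrite mu_odd.
    eapply is_RInt_val_eq.
    eapply is_RInt_ext; [|exact (is_RInt_scal _ _ _ (2^(S (2*j))) _ H)].
    intros x _. rewrite Rpow_mult_distr. reflexivity.
    unfold scal; simpl; unfold mult; simpl. ring.
Qed.


Module Comb.
From mathcomp Require Import ssreflect ssrfun ssrbool eqtype ssrnat seq choice fintype bigop binomial.
Definition bn := binomial.
Fixpoint nsum (f : nat -> nat) (n : nat) : nat :=
  match n with O => f O | S k => nsum f k + f (S k) end.
Lemma nsum_big f n : nsum f n = \sum_(i < n.+1) f i.
Proof. elim: n => [|n IH] /=; first by rewrite big_ord_recr big_ord0.
  by rewrite IH [in RHS]big_ord_recr. Qed.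
Lemma vand j : nsum (fun i => Nat.mul (bn j i) (bn j i)) j = bn (Nat.add j j) j.
Proof.
  rewrite nsum_big /bn -Vandermonde. apply: eq_bigr => i _.
  by rewrite bin_sub // -ltnS.
Qed.
Lemma fact_eq n : factorial n = Factorial.fact n.
Proof. elim: n => [|n IH] //. by rewrite factS IH. Qed.
Lemma bn_fact n m : (m <= n)%coq_nat -> Nat.mul (bn n m) (Nat.mul (Factorial.fact m) (Factorial.fact (Nat.sub n m))) = Factorial.fact n.
Proof. move/leP => H. rewrite /bn -!fact_eq. exact: bin_fact. Qed.
End Comb.

Lemma C_bn n m : (m <= n)%nat -> Binomial.C n m = INR (Comb.bn n m).
Proof.
  intros H. unfold Binomial.C. assert (E := Comb.bn_fact n m H).
  apply (f_equal INR) in E. rewrite !mult_INR in E. rewrite <- E.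
  assert (H1 := INR_fact_neq_0 m). assert (H2 := INR_fact_neq_0 (n-m)).
  field. auto.
Qed.
Lemma nsum_INR f n : INR (Comb.nsum f n) = sum_f_R0 (fun i => INR (f i)) n.
Proof. induction n; simpl Comb.nsum; [reflexivity|]. rewrite plus_INR, IHn. reflexivity. Qed.

Definition u t := 2 * cs t.

Lemma is_RInt_sum_f (g : nat -> R -> R) (I : nat -> R) n :
  (forall i, (i <= n)%nat -> is_RInt (g i) 0 1 (I i)) ->
  is_RInt (fun t => sum_f_R0 (fun i => g i t) n) 0 1 (sum_f_R0 I n).
Proof.
  induction n; intros H.
  - simpl. apply H; lia.
  - simpl. apply (is_RInt_plus (V:=R_NormedModule)). apply IHn; intros; apply H; lia. apply H; lia.
Qed.

Lemma inner n y : is_RInt (fun t => (y + u t)^n) 0 1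
   (sum_f_R0 (fun i => Binomial.C n i * mu i * y^(n-i)) n).
Proof.
  apply (is_RInt_ext (fun t => sum_f_R0 (fun i => Binomial.C n i * u t ^ i * y^(n-i)) n)).
  { intros x _. rewrite Rplus_comm, binomial. reflexivity. }
  apply is_RInt_sum_f. intros i _.
  eapply is_RInt_val_eq.
  eapply is_RInt_ext; [|exact (is_RInt_scal _ _ _ (Binomial.C n i * y^(n-i)) _ (mom i))].
  intros x _. unfold u, scal; simpl; unfold mult; simpl. ring.
  unfold scal; simpl; unfold mult; simpl. ring.
Qed.

Definition mm n := sum_f_R0 (fun i => Binomial.C n i * mu i * mu (n-i)) n.

Lemma outer n : is_RInt (fun t => sum_f_R0 (fun i => Binomial.C n i * mu i * u t^(n-i)) n) 0 1 (mm n).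
Proof.
  apply is_RInt_sum_f. intros i _.
  eapply is_RInt_val_eq.
  eapply is_RInt_ext; [|exact (is_RInt_scal _ _ _ (Binomial.C n i * mu i) _ (mom (n-i)))].
  intros x _. unfold u, scal; simpl; unfold mult; simpl. ring.
  unfold scal; simpl; unfold mult; simpl. ring.
Qed.

Lemma sum_zero (f : nat -> R) n : (forall i, (i <= n)%nat -> f i = 0) -> sum_f_R0 f n = 0.
Proof. induction n; intros H; simpl. apply H; lia. rewrite IHn, H; [ring|lia|intros; apply H; lia]. Qed.

Lemma mm_odd j : mm (S (2*j)) = 0.
Proof.
  unfold mm. apply sum_zero. intros i Hi.
  destruct (Nat.Even_or_Odd i) as [[a Ha]|[a Ha]]; subst i.
  - replace (S (2*j) - 2*a)%nat with (S (2*(j-a))) by lia. rewrite mu_odd. ring.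
  - replace (2*a+1)%nat with (S (2*a)) by lia. rewrite mu_odd. ring.
Qed.

Lemma sum_even (f : nat -> R) j : (forall a, f (S (2*a)) = 0) ->
  sum_f_R0 f (2*j) = sum_f_R0 (fun a => f (2*a)%nat) j.
Proof.
  intros H. induction j. reflexivity.
  replace (2 * S j)%nat with (S (S (2*j))) by lia.
  rewrite (tech5 f (S (2*j))), (tech5 f (2*j)), IHj, H.
  rewrite (tech5 _ j). replace (S (S (2*j))) with (2 * S j)%nat by lia. ring.
Qed.

Lemma cb_C j : cb j = Binomial.C (2*j) j.
Proof. unfold cb, Binomial.C. replace (2*j - j)%nat with j by lia. reflexivity. Qed.

Lemma term_id j a : (a <= j)%nat ->
  Binomial.C (2*j) (2*a) * cb a * cb (j-a) = cb j * (Binomial.C j a * Binomial.C j a).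
Proof.
  intros H. unfold Binomial.C, cb. replace (2*j - 2*a)%nat with (2*(j-a))%nat by lia.
  assert (H1 := INR_fact_neq_0 (2*j)). assert (H2 := INR_fact_neq_0 j).
  assert (H3 := INR_fact_neq_0 (2*a)). assert (H4 := INR_fact_neq_0 a).
  assert (H5 := INR_fact_neq_0 (2*(j-a))). assert (H6 := INR_fact_neq_0 (j-a)).
  field. repeat split; auto.
Qed.

Lemma mm_even j : mm (2*j) = cb j ^ 2.
Proof.
  unfold mm. rewrite sum_even.
  2:{ intros a. rewrite mu_odd. ring. }
  rewrite (sum_eq _ (fun a => (INR (Comb.bn j a) * INR (Comb.bn j a)) * cb j)).
  2:{ intros a Ha. replace (2*j - 2*a)%nat with (2*(j-a))%nat by lia.
      rewrite !mu_even, term_id by lia. rewrite C_bn by lia. ring. }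
  rewrite <- scal_sum. 
  assert (E : sum_f_R0 (fun a => INR (Comb.bn j a) * INR (Comb.bn j a)) j = cb j).
  { rewrite cb_C, C_bn by lia. replace (2*j)%nat with (Nat.add j j) by lia.
    rewrite <- (Comb.vand j), nsum_INR.
    apply sum_eq. intros; rewrite mult_INR; reflexivity. }
  rewrite E. ring.
Qed.

Lemma RtoC_neq0 x : x <> 0 -> RtoC x <> RtoC 0.
Proof. intros H E. apply H. apply (f_equal fst) in E. exact E. Qed.

Lemma cbinom_S s n : Cmult (cbinom s (S n)) (RtoC (INR (S n))) = Cmult (cbinom s n) (Cminus s (RtoC (INR n))).
Proof.
  unfold cbinom. simpl cbinom_num. replace (fact (S n)) with (S n * fact n)%nat by reflexivity.
  rewrite mult_INR, RtoC_mult.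
  assert (H1 := RtoC_neq0 _ (INR_fact_neq_0 n)).
  assert (H2 : RtoC (INR (S n)) <> RtoC 0) by (apply RtoC_neq0; apply not_0_INR; lia).
  field. split; auto.
Qed.

Definition ar s n := Re (cbinom s n).
Definition ai s n := Im (cbinom s n).

Lemma ar_S s n : ar s (S n) * INR (S n) = ar s n * (Re s - INR n) - ai s n * Im s.
Proof.
  assert (E := f_equal Re (cbinom_S s n)). unfold ar, ai.
  destruct (cbinom s (S n)) as [p q]. destruct (cbinom s n) as [p' q']. destruct s as [s1 s2].
  simpl in *. lra.
Qed.

Lemma ai_S s n : ai s (S n) * INR (S n) = ar s n * Im s + ai s n * (Re s - INR n).
Proof.
  assert (E := f_equal Im (cbinom_S s n)). unfold ar, ai.
  destruct (cbinom s (S n)) as [p q]. destruct (cbinom s n) as [p' q']. destruct s as [s1 s2].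
  simpl in *. lra.
Qed.

Lemma ar_0 s : ar s 0 = 1.
Proof. unfold ar, cbinom. simpl. unfold Cdiv, Cinv, Cmult. simpl. field. Qed.
Lemma ai_0 s : ai s 0 = 0.
Proof. unfold ai, cbinom. simpl. unfold Cdiv, Cinv, Cmult. simpl. field. Qed.

Fixpoint bb (sg : R) (n : nat) : R :=
  match n with O => 1 | S k => bb sg k * ((sg + INR k) / (INR k + 1)) end.

Lemma bb_pos sg n : 0 < sg -> 0 < bb sg n.
Proof.
  intros H. induction n; simpl. lra.
  assert (0 <= INR n) by apply pos_INR.
  apply Rmult_lt_0_compat; auto. apply Rdiv_lt_0_compat; lra.
Qed.

Lemma cbinom_bound s n : Cmod (cbinom s n) <= bb (Cmod s + 1) n.
Proof.
  induction n.
  - simpl. unfold cbinom; simpl. replace (Cdiv (RtoC 1) (RtoC 1)) with (RtoC 1).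
    rewrite Cmod_1. lra. unfold Cdiv, Cinv, Cmult, RtoC; simpl. f_equal; field.
  - simpl bb.
    assert (E := f_equal Cmod (cbinom_S s n)). rewrite !Cmod_mult, Cmod_R in E.
    assert (P := pos_INR n).
    rewrite Rabs_pos_eq in E by (apply pos_INR). rewrite S_INR in E.
    assert (T : Cmod (Cminus s (RtoC (INR n))) <= Cmod s + INR n).
    { unfold Cminus. eapply Rle_trans. apply Cmod_triangle. rewrite Cmod_opp, Cmod_R, Rabs_pos_eq by auto. lra. }
    assert (M0 := Cmod_ge_0 (cbinom s n)).
    apply Rmult_le_reg_r with (INR n + 1). lra.
    rewrite E. unfold Rdiv.
    replace (bb (Cmod s + 1) n * ((Cmod s + 1 + INR n) * / (INR n + 1)) * (INR n + 1))
      with (bb (Cmod s + 1) n * (Cmod s + 1 + INR n)) by (field; lra).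
    apply Rmult_le_compat; auto. apply Cmod_ge_0. lra.
Qed.

Lemma lim_inv_n : is_lim_seq (fun n => / (INR n + 1)) 0.
Proof.
  replace (Finite 0) with (Rbar_inv p_infty) by reflexivity.
  apply is_lim_seq_inv; [|discriminate].
  apply is_lim_seq_ext with (fun n => INR (S n)). intros; apply S_INR.
  apply (is_lim_seq_incr_1 INR p_infty). apply is_lim_seq_INR.
Qed.

Lemma bb_series sg r : 0 < sg -> 0 < r < 1 -> ex_series (fun n => bb sg n * r^n).
Proof.
  intros Hs Hr.
  apply ex_series_ext with (fun n => Rabs (bb sg n * r^n)).
  { intros n. apply Rabs_pos_eq. apply Rmult_le_pos. apply Rlt_le, bb_pos; auto. apply pow_le; lra. }
  apply (ex_series_DAlembert _ r). lra.
  { intros n. apply Rgt_not_eq, Rmult_lt_0_compat. apply bb_pos; auto. apply pow_lt; lra. }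
  apply is_lim_seq_ext with (fun n => r * (1 + (sg - 1) * / (INR n + 1))).
  { intros n. simpl bb. simpl pow. assert (P := pos_INR n). assert (B := bb_pos sg n Hs).
    assert (Q := pow_lt r n (proj1 Hr)).
    assert (B' : bb sg n <> 0) by lra. assert (Q' : r^n <> 0) by lra.
    rewrite Rabs_pos_eq. field. repeat split; lra.
    apply Rlt_le. unfold Rdiv. repeat (apply Rmult_lt_0_compat || apply Rinv_0_lt_compat); lra. }
  replace (Finite r) with (Finite (r * (1 + (sg - 1) * 0))) by (f_equal; ring).
  apply is_lim_seq_mult'. apply is_lim_seq_const. apply is_lim_seq_plus'. apply is_lim_seq_const.
  apply is_lim_seq_mult'. apply is_lim_seq_const. apply lim_inv_n.
Qed.

Lemma abs_series s r : 0 < r < 1 -> ex_series (fun n => Cmod (cbinom s n) * r^n).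
Proof.
  intros Hr. apply (ex_series_le (V:=R_CompleteNormedModule)) with (fun n => bb (Cmod s + 1) n * r^n).
  - intros n. unfold norm; simpl. rewrite Rabs_pos_eq.
    apply Rmult_le_compat_r. apply pow_le; lra. apply cbinom_bound.
    apply Rmult_le_pos. apply Cmod_ge_0. apply pow_le; lra.
  - apply bb_series; auto. assert (H := Cmod_ge_0 s). lra.
Qed.

Lemma CV_gen (a : nat -> R) s x : (forall n, Rabs (a n) <= Cmod (cbinom s n)) ->
  Rabs x < 1 -> Rbar_lt (Rabs x) (CV_radius a).
Proof.
  intros Ha Hx. set (r := (Rabs x + 1)/2).
  assert (Hr : 0 < r < 1) by (assert (H := Rabs_pos x); unfold r; lra).
  assert (D : CV_disk a r).
  { unfold CV_disk. apply (ex_series_le (V:=R_CompleteNormedModule)) with (fun n => Cmod (cbinom s n) * r^n).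
    - intros n. unfold norm; simpl. rewrite Rabs_Rabsolu, Rabs_mult, (Rabs_pos_eq (r^n)) by (apply pow_le; lra).
      apply Rmult_le_compat_r. apply pow_le; lra. apply Ha.
    - apply abs_series; auto. }
  apply Rbar_lt_le_trans with (Finite r). simpl. unfold r; lra.
  unfold CV_radius. destruct (Lub_Rbar_correct (CV_disk a)) as [U _]. apply U. exact D.
Qed.

Lemma CV_ar s x : Rabs x < 1 -> Rbar_lt (Rabs x) (CV_radius (ar s)).
Proof. apply CV_gen with s. intros; apply re_le_Cmod. Qed.
Lemma CV_ai s x : Rabs x < 1 -> Rbar_lt (Rabs x) (CV_radius (ai s)).
Proof. apply CV_gen with s. intros n. unfold ai. destruct (cbinom s n) as [p q]. unfold Cmod; simpl.
  rewrite <- sqrt_Rsqr_abs. apply sqrt_le_1_alt. unfold Rsqr. nra. Qed.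

Definition gr s x := PSeries (ar s) x.
Definition gi s x := PSeries (ai s) x.

Lemma Derive_PS a x : Rbar_lt (Rabs x) (CV_radius a) -> Derive (PSeries a) x = PSeries (PS_derive a) x.
Proof. intros H. apply is_derive_unique, is_derive_PSeries, H. Qed.

Lemma ode_gen (a b c : nat -> R) p q x : Rabs x < 1 ->
  Rbar_lt (Rabs x) (CV_radius a) -> Rbar_lt (Rabs x) (CV_radius b) -> Rbar_lt (Rabs x) (CV_radius c) ->
  (forall n, a (S n) * INR (S n) = p * b n + q * c n - INR n * a n) ->
  (1 + x) * Derive (PSeries a) x = p * PSeries b x + q * PSeries c x.
Proof.
  intros Hx Ha Hb Hc Hrec.
  rewrite Derive_PS by auto.
  assert (Ed := ex_pseries_derive a x Ha).
  rewrite Rmult_plus_distr_r, Rmult_1_l, <- PSeries_incr_1.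
  rewrite <- PSeries_plus by (auto; apply ex_pseries_incr_1; auto).
  rewrite <- (PSeries_scal p b), <- (PSeries_scal q c).
  rewrite <- PSeries_plus.
  2:{ apply ex_pseries_scal. apply Rmult_comm. apply CV_radius_inside; auto. }
  2:{ apply ex_pseries_scal. apply Rmult_comm. apply CV_radius_inside; auto. }
  apply PSeries_ext. intros n.
  unfold PS_plus, PS_scal, PS_incr_1, PS_derive, plus, scal, zero; simpl; unfold mult; simpl.
  destruct n.
  - rewrite (Rmult_comm (INR 1)). rewrite Hrec. simpl. ring.
  - change (match n with 0%nat => 1 | S _ => INR n + 1 end) with (INR (S n)).
    rewrite <- S_INR, (Rmult_comm (INR (S (S n)))), Hrec. ring.
Qed.

Lemma gr_ode s x : Rabs x < 1 -> (1 + x) * Derive (gr s) x = Re s * gr s x + (- Im s) * gi s x.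
Proof.
  intros Hx. apply ode_gen; auto using CV_ar, CV_ai.
  intros n. rewrite ar_S. ring.
Qed.

Lemma gi_ode s x : Rabs x < 1 -> (1 + x) * Derive (gi s) x = Im s * gr s x + Re s * gi s x.
Proof.
  intros Hx. apply ode_gen; auto using CV_ar, CV_ai.
  intros n. rewrite ai_S. ring.
Qed.

Definition hr s x := exp (- Re s * ln (1 + x)) * (cos (Im s * ln (1 + x)) * gr s x + sin (Im s * ln (1 + x)) * gi s x).
Definition hi s x := exp (- Re s * ln (1 + x)) * (cos (Im s * ln (1 + x)) * gi s x - sin (Im s * ln (1 + x)) * gr s x).

Lemma ex_der_gr s t : Rabs t < 1 -> ex_derive (gr s) t.
Proof. intros H. eexists. apply is_derive_PSeries. apply CV_ar; auto. Qed.
Lemma ex_der_gi s t : Rabs t < 1 -> ex_derive (gi s) t.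
Proof. intros H. eexists. apply is_derive_PSeries. apply CV_ai; auto. Qed.

Lemma hr_der s t : Rabs t < 1 -> is_derive (hr s) t 0.
Proof.
  intros Ht. assert (H1 : 0 < 1 + t) by (apply Rabs_def2 in Ht; lra).
  assert (O1 := gr_ode s t Ht). assert (O2 := gi_ode s t Ht).
  unfold hr. auto_derive.
  { repeat split; auto using ex_der_gr, ex_der_gi. }
  set (L := ln (1+t)) in *.
  change (fun x => gr s x) with (gr s). change (fun x => gi s x) with (gi s).
  replace (Derive (gr s) t) with ((Re s * gr s t + - Im s * gi s t) / (1 + t)) by (rewrite <- O1; field; lra).
  replace (Derive (gi s) t) with ((Im s * gr s t + Re s * gi s t) / (1 + t)) by (rewrite <- O2; field; lra).
  field. lra.
Qed.

Lemma hi_der s t : Rabs t < 1 -> is_derive (hi s) t 0.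
Proof.
  intros Ht. assert (H1 : 0 < 1 + t) by (apply Rabs_def2 in Ht; lra).
  assert (O1 := gr_ode s t Ht). assert (O2 := gi_ode s t Ht).
  unfold hi. auto_derive.
  { repeat split; auto using ex_der_gr, ex_der_gi. }
  set (L := ln (1+t)) in *.
  change (fun x => gr s x) with (gr s). change (fun x => gi s x) with (gi s).
  replace (Derive (gr s) t) with ((Re s * gr s t + - Im s * gi s t) / (1 + t)) by (rewrite <- O1; field; lra).
  replace (Derive (gi s) t) with ((Im s * gr s t + Re s * gi s t) / (1 + t)) by (rewrite <- O2; field; lra).
  field. lra.
Qed.

Lemma const_on (f : R -> R) x : Rabs x < 1 -> (forall t, Rabs t < 1 -> is_derive f t 0) -> f x = f 0.
Proof.
  intros Hx Hd. apply Rabs_def2 in Hx.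
  destruct (Rtotal_order x 0) as [H|[H|H]].
  - apply (eq_is_derive (V:=R_NormedModule)); [|lra]. intros t Ht. apply Hd. apply Rabs_def1; lra.
  - subst; reflexivity.
  - symmetry. apply (eq_is_derive (V:=R_NormedModule)); [|lra]. intros t Ht. apply Hd. apply Rabs_def1; lra.
Qed.

Lemma g_closed s x : Rabs x < 1 ->
  gr s x = exp (Re s * ln (1 + x)) * cos (Im s * ln (1 + x)) /\
  gi s x = exp (Re s * ln (1 + x)) * sin (Im s * ln (1 + x)).
Proof.
  intros Hx.
  assert (A := const_on (hr s) x Hx (fun t Ht => hr_der s t Ht)).
  assert (B := const_on (hi s) x Hx (fun t Ht => hi_der s t Ht)).
  unfold hr, hi, gr, gi in A, B. rewrite !PSeries_0, Rplus_0_r, ln_1, !Rmult_0_r, exp_0, cos_0, sin_0 in A, B.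
  rewrite ar_0, ai_0 in A, B. fold (gr s x) (gi s x) in A, B.
  set (L := ln (1 + x)) in *. set (E := exp (Re s * L)).
  assert (EE : exp (- Re s * L) * E = 1) by (unfold E; rewrite <- exp_plus; replace (- Re s * L + Re s * L) with 0 by ring; apply exp_0).
  assert (T := sin2_cos2 (Im s * L)). unfold Rsqr in T.
  set (co := cos (Im s * L)) in *. set (si := sin (Im s * L)) in *.
  assert (A' : co * gr s x + si * gi s x = E).
  { rewrite <- (Rmult_1_l (co * gr s x + si * gi s x)), <- EE. rewrite Rmult_comm with (r1:=exp _).
    rewrite Rmult_assoc, A. ring. }
  assert (B' : co * gi s x - si * gr s x = 0).
  { assert (P : exp (- Re s * L) <> 0) by (apply Rgt_not_eq, exp_pos).
    apply (Rmult_eq_reg_l (exp (- Re s * L))); auto. rewrite B. ring. }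
  split.
  - transitivity (co * (co * gr s x + si * gi s x) - si * (co * gi s x - si * gr s x)).
    + transitivity (gr s x * (si * si + co * co)). rewrite T; ring. ring.
    + rewrite A', B'. ring.
  - transitivity (si * (co * gr s x + si * gi s x) + co * (co * gi s x - si * gr s x)).
    + transitivity (gi s x * (si * si + co * co)). rewrite T; ring. ring.
    + rewrite A', B'. ring.
Qed.

Lemma sum_n_fst (u : nat -> C) N : fst (sum_n u N) = sum_n (fun n => fst (u n)) N.
Proof. induction N. rewrite !sum_O. reflexivity. rewrite !sum_Sn. simpl. rewrite <- IHN. reflexivity. Qed.
Lemma sum_n_snd (u : nat -> C) N : snd (sum_n u N) = sum_n (fun n => snd (u n)) N.
Proof. induction N. rewrite !sum_O. reflexivity. rewrite !sum_Sn. simpl. rewrite <- IHN. reflexivity. Qed.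

Lemma is_series_C (u : nat -> C) l1 l2 :
  is_series (fun n => fst (u n)) l1 -> is_series (fun n => snd (u n)) l2 ->
  is_series (V:=C_NormedModule) u (l1, l2).
Proof.
  intros H1 H2. unfold is_series in *.
  apply filterlim_locally. intros eps.
  assert (B1 := proj1 (filterlim_locally _ _) H1 eps). assert (B2 := proj1 (filterlim_locally _ _) H2 eps).
  generalize (filter_and _ _ B1 B2). apply filter_imp. intros N [C1 C2].
  split.
  - change (ball l1 eps (fst (sum_n u N))).
    replace (fst (sum_n u N)) with (sum_n (fun n => fst (u n)) N) by (symmetry; apply sum_n_fst). exact C1.
  - change (ball l2 eps (snd (sum_n u N))).
    replace (snd (sum_n u N)) with (sum_n (fun n => snd (u n)) N) by (symmetry; apply sum_n_snd). exact C2.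
Qed.

Lemma binom_series s x : Rabs x < 1 ->
  is_series (V:=C_NormedModule) (fun n => Cmult (cbinom s n) (RtoC (x^n))) (cexp (Cmult s (RtoC (ln (1+x))))).
Proof.
  intros Hx. destruct (g_closed s x Hx) as [E1 E2].
  replace (cexp (Cmult s (RtoC (ln (1+x))))) with (gr s x, gi s x).
  2:{ rewrite E1, E2. unfold cexp. destruct s as [s1 s2]. simpl. f_equal; f_equal; f_equal; ring. }
  apply is_series_C.
  - apply is_series_ext with (fun n => ar s n * x^n).
    { intros n. unfold ar. destruct (cbinom s n). simpl. ring. }
    apply is_pseries_R. apply PSeries_correct. apply CV_radius_inside. apply CV_ar; auto.
  - apply is_series_ext with (fun n => ai s n * x^n).
    { intros n. unfold ai. destruct (cbinom s n). simpl. ring. }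
    apply is_pseries_R. apply PSeries_correct. apply CV_radius_inside. apply CV_ai; auto.
Qed.

Lemma Pc_e2pi c t1 t2 : Pc c (e2pi t1) (e2pi t2) = RtoC (c + u t1 + u t2).
Proof.
  unfold Pc, e2pi, cexp, u, cs. simpl. rewrite exp_0, !Rmult_1_l.
  assert (T1 := sin2_cos2 (2*PI*t1)). assert (T2 := sin2_cos2 (2*PI*t2)). unfold Rsqr in *.
  unfold Cplus, Cinv, RtoC. simpl.
  replace (cos (2 * PI * t1) * (cos (2 * PI * t1) * 1) + sin (2 * PI * t1) * (sin (2 * PI * t1) * 1)) with 1 by lra.
  replace (cos (2 * PI * t2) * (cos (2 * PI * t2) * 1) + sin (2 * PI * t2) * (sin (2 * PI * t2) * 1)) with 1 by lra.
  f_equal; field.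
Qed.

Lemma cexp_add z w : cexp (Cplus z w) = Cmult (cexp z) (cexp w).
Proof.
  destruct z as [a b], w as [a' b']. unfold cexp, Cplus, Cmult. simpl.
  rewrite exp_plus, cos_plus, sin_plus. f_equal; ring.
Qed.

Lemma rpowC_pos v s : 0 < v -> rpowC v s = cexp (Cmult s (RtoC (ln v))).
Proof. intros H. unfold rpowC. destruct (Rlt_dec 0 v); [reflexivity|lra]. Qed.

Lemma u_bound t : Rabs (u t) <= 2.
Proof. unfold u, cs. rewrite Rabs_mult, Rabs_pos_eq by lra.
  assert (H := COS_bound (2*PI*t)). assert (Rabs (cos (2*PI*t)) <= 1) by (apply Rabs_le; lra). lra. Qed.

Definition xx c t1 t2 := (u t1 + u t2) / c.

Lemma xx_bound c t1 t2 : 4 < c -> Rabs (xx c t1 t2) <= 4 / c.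
Proof.
  intros H. unfold xx. unfold Rdiv. rewrite Rabs_mult, (Rabs_pos_eq (/c)) by (apply Rlt_le, Rinv_0_lt_compat; lra).
  apply Rmult_le_compat_r. apply Rlt_le, Rinv_0_lt_compat; lra.
  eapply Rle_trans. apply Rabs_triang. assert (A := u_bound t1). assert (B := u_bound t2). lra.
Qed.

Lemma F_formula c s t1 t2 : 4 < c ->
  rpowC (Cmod (Pc c (e2pi t1) (e2pi t2))) s = Cmult (rpowC c s) (cexp (Cmult s (RtoC (ln (1 + xx c t1 t2))))).
Proof.
  intros Hc. rewrite Pc_e2pi, Cmod_R.
  assert (A := u_bound t1). assert (B := u_bound t2).
  apply Rabs_le_between in A. apply Rabs_le_between in B.
  assert (P : 0 < c + u t1 + u t2) by lra.
  rewrite Rabs_pos_eq by lra.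
  rewrite !rpowC_pos by lra. rewrite <- cexp_add. f_equal.
  replace (c + u t1 + u t2) with (c * (1 + xx c t1 t2)) by (unfold xx; field; lra).
  assert (P2 : 0 < 1 + xx c t1 t2).
  { unfold xx. replace (1 + (u t1 + u t2)/c) with ((c + u t1 + u t2)/c) by (field; lra).
    apply Rdiv_lt_0_compat; lra. }
  rewrite ln_mult by lra. rewrite RtoC_plus. ring.
Qed.

Lemma normCR (z:C) : norm (K:=R_AbsRing) (V:=C_R_NormedModule) z = Cmod z.
Proof. destruct z as [a b]. unfold norm. simpl. unfold prod_norm, Cmod. simpl. unfold norm; simpl. unfold abs; simpl.
  rewrite !Rmult_1_r, <- !Rabs_mult, !Rabs_pos_eq; auto; apply Rle_0_sqr. Qed.

Lemma partial_le_lim (v : nat -> R) L M : (forall n, 0 <= v n) -> is_series v L -> sum_n v M <= L.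
Proof.
  intros Hv HL.
  assert (H := is_lim_seq_le_loc (fun _ => sum_n v M) (sum_n v) (sum_n v M) L).
  simpl in H. apply H.
  - exists M. intros K HK. induction HK. lra. rewrite sum_Sn. unfold plus; simpl. specialize (Hv (S m)). lra.
  - apply is_lim_seq_const.
  - exact HL.
Qed.

Lemma tail_bound (w : nat -> C) l (v : nat -> R) L N :
  is_series (V:=C_NormedModule) w l -> (forall n, Cmod (w n) <= v n) -> is_series v L ->
  Cmod (Cminus l (sum_n w N)) <= L - sum_n v N.
Proof.
  intros Hw Hb HL. apply Rle_plus_epsilon. intros eps Heps.
  assert (Hv : forall n, 0 <= v n) by (intros n; eapply Rle_trans; [apply Cmod_ge_0|apply Hb]).
  destruct (proj1 (filterlim_locally_ball_norm _ _) Hw (mkposreal eps Heps)) as [M0 HM0].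
  set (M := max M0 N).
  specialize (HM0 M (Nat.le_max_l _ _)).
  unfold ball_norm in HM0. simpl in HM0.
  assert (E1 : Cmod (Cminus (sum_n w M) (sum_n w N)) <= sum_n v M - sum_n v N).
  { destruct (Nat.eq_dec M N) as [e|ne].
    - rewrite e. unfold Cminus. rewrite Cplus_opp_r, Cmod_0. lra.
    - assert (HNM : (N <= M)%nat) by (unfold M; lia).
      assert (E := sum_n_m_sum_n w N M HNM).
      assert (E' := sum_n_m_sum_n v N M HNM).
      replace (Cminus (sum_n w M) (sum_n w N)) with (sum_n_m w (S N) M) by exact E.
      replace (sum_n v M - sum_n v N) with (sum_n_m v (S N) M) by exact E'.
      eapply Rle_trans. apply (norm_sum_n_m (K:=C_AbsRing) (V:=C_NormedModule) w (S N) M).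
      apply sum_n_m_le. intros k. apply Hb. }
  assert (E2 := partial_le_lim v L M Hv HL).
  replace (Cminus l (sum_n w N)) with (Cplus (Cminus l (sum_n w M)) (Cminus (sum_n w M) (sum_n w N))) by ring.
  eapply Rle_trans. apply Cmod_triangle.
  assert (E3 : Cmod (Cminus l (sum_n w M)) < eps).
  { replace (Cminus l (sum_n w M)) with (Copp (Cminus (sum_n w M) l)) by ring.
    rewrite Cmod_opp. exact HM0. }
  lra.
Qed.

Lemma is_RInt_val_eqC (f:R->C) a b (l l' : C) : is_RInt (V:=C_R_CompleteNormedModule) f a b l -> l = l' -> is_RInt (V:=C_R_CompleteNormedModule) f a b l'.
Proof. intros H E; subst; exact H. Qed.

Lemma is_RInt_Cscal (f : R -> R) (z : C) a b l : is_RInt f a b l ->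
  is_RInt (V:=C_R_CompleteNormedModule) (fun t => Cmult z (RtoC (f t))) a b (Cmult z (RtoC l)).
Proof.
  intros H. destruct z as [p q].
  replace (Cmult (p,q) (RtoC l)) with (scal p l, scal q l).
  2:{ unfold Cmult, RtoC, scal; simpl; unfold mult; simpl. f_equal; ring. }
  apply (is_RInt_fct_extend_pair (U:=R_NormedModule) (V:=R_NormedModule)).
  - eapply is_RInt_ext; [|apply is_RInt_scal; exact H]. intros x _. unfold Cmult, RtoC, scal; simpl; unfold mult; simpl. ring.
  - eapply is_RInt_ext; [|apply is_RInt_scal; exact H]. intros x _. unfold Cmult, RtoC, scal; simpl; unfold mult; simpl. ring.
Qed.

Lemma is_RInt_Csum (g : nat -> R -> C) (I : nat -> C) N :
  (forall n, is_RInt (V:=C_R_CompleteNormedModule) (g n) 0 1 (I n)) ->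
  is_RInt (V:=C_R_CompleteNormedModule) (fun t => sum_n (fun n => g n t) N) 0 1 (sum_n I N).
Proof.
  intros H. induction N.
  - eapply is_RInt_ext; [|eapply is_RInt_val_eqC; [apply (H O)| rewrite sum_O; reflexivity]].
    intros x _. rewrite sum_O. reflexivity.
  - eapply is_RInt_ext; [|eapply is_RInt_val_eqC; [apply (is_RInt_plus _ _ _ _ _ _ IHN (H (S N)))| rewrite sum_Sn; reflexivity]].
    intros x _. rewrite sum_Sn. reflexivity.
Qed.

Definition FF c s t1 t2 := rpowC (Cmod (Pc c (e2pi t1) (e2pi t2))) s.
Definition wt c s n := Cmult (rpowC c s) (cbinom s n).
Definition In c n y := / c^n * sum_f_R0 (fun i => Binomial.C n i * mu i * y^(n-i)) n.
Definition fN c s N t1 t2 := sum_n (fun n => Cmult (wt c s n) (RtoC (xx c t1 t2 ^ n))) N.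
Definition rr c := 4 / c.
Definition vv c s n := Cmod (cbinom s n) * rr c ^ n.
Definition vK c s n := Cmod (rpowC c s) * vv c s n.
Definition epsN c s N := Cmod (rpowC c s) * Series (vv c s) - sum_n (vK c s) N.

Lemma rr_bounds c : 4 < c -> 0 < rr c < 1.
Proof. intros H. unfold rr. split. apply Rdiv_lt_0_compat; lra.
  apply Rmult_lt_reg_r with c. lra. unfold Rdiv. rewrite Rmult_assoc, Rinv_l by lra. lra. Qed.

Lemma vv_series c s : 4 < c -> is_series (vv c s) (Series (vv c s)).
Proof. intros H. apply Series_correct. apply abs_series. apply rr_bounds; auto. Qed.

Lemma vK_series c s : 4 < c -> is_series (vK c s) (Cmod (rpowC c s) * Series (vv c s)).
Proof. intros H. apply (is_series_scal (K:=R_AbsRing) (V:=R_NormedModule) _ _ _ (vv_series c s H)). Qed.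

Lemma epsN_lim c s : 4 < c -> forall eps, 0 < eps -> eventually (fun N => epsN c s N < eps).
Proof.
  intros H eps He.
  destruct (proj1 (filterlim_locally_ball_norm _ _) (vK_series c s H) (mkposreal eps He)) as [M HM].
  exists M. intros N HN. specialize (HM N HN). unfold ball_norm in HM.
  assert (HM' : Rabs (sum_n (vK c s) N - Cmod (rpowC c s) * Series (vv c s)) < eps) by exact HM.
  unfold epsN. apply Rabs_lt_between in HM'. lra.
Qed.

Lemma unif c s t1 t2 N : 4 < c -> Cmod (Cminus (FF c s t1 t2) (fN c s N t1 t2)) <= epsN c s N.
Proof.
  intros Hc. unfold FF. rewrite F_formula by auto.
  assert (Hx := xx_bound c t1 t2 Hc). assert (Hr := rr_bounds c Hc).
  assert (Hx1 : Rabs (xx c t1 t2) < 1) by (unfold rr in Hr; lra).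
  assert (S1 := binom_series s _ Hx1).
  assert (S2 := is_series_scal (K:=C_AbsRing) (V:=C_NormedModule) (rpowC c s) _ _ S1).
  assert (S3 : is_series (V:=C_NormedModule) (fun n => Cmult (wt c s n) (RtoC (xx c t1 t2 ^ n))) (Cmult (rpowC c s) (cexp (Cmult s (RtoC (ln (1 + xx c t1 t2))))))).
  { eapply is_series_ext; [|exact S2]. intros n. unfold scal; simpl; unfold mult; simpl. unfold wt. ring. }
  refine (tail_bound _ _ _ _ N S3 _ (vK_series c s Hc)).
  intros n.
  unfold wt, vK, vv. rewrite !Cmod_mult, Cmod_R, <- RPow_abs.
  rewrite Rmult_assoc. apply Rmult_le_compat_l. apply Cmod_ge_0.
  apply Rmult_le_compat_l. apply Cmod_ge_0. apply pow_incr. split. apply Rabs_pos. fold (rr c) in Hx; lra.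
Qed.

Lemma term_inner c n t1 : 4 < c -> is_RInt (fun t2 => xx c t1 t2 ^ n) 0 1 (In c n (u t1)).
Proof.
  intros Hc. unfold In.
  eapply is_RInt_ext; [|exact (is_RInt_scal _ _ _ (/ c^n) _ (inner n (u t1)))].
  intros x _. unfold xx, scal; simpl; unfold mult; simpl. unfold Rdiv. rewrite Rpow_mult_distr, pow_inv. ring.
Qed.

Lemma term_outer c n : 4 < c -> is_RInt (fun t1 => In c n (u t1)) 0 1 (mm n / c^n).
Proof.
  intros Hc. unfold In.
  eapply is_RInt_val_eq.
  eapply is_RInt_ext; [|exact (is_RInt_scal _ _ _ (/ c^n) _ (outer n))].
  intros x _. unfold scal; simpl; unfold mult; simpl. reflexivity.
  unfold scal; simpl; unfold mult; simpl. unfold Rdiv. ring.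
Qed.

Lemma fN_int c s N t1 : 4 < c -> is_RInt (V:=C_R_CompleteNormedModule) (fN c s N t1) 0 1
  (sum_n (fun n => Cmult (wt c s n) (RtoC (In c n (u t1)))) N).
Proof.
  intros Hc. unfold fN.
  apply (is_RInt_Csum (fun n t2 => Cmult (wt c s n) (RtoC (xx c t1 t2 ^ n)))).
  intros n. apply is_RInt_Cscal. apply term_inner; auto.
Qed.

Lemma inner_step c s t1 : 4 < c -> exists If,
  filterlim (fun N => sum_n (fun n => Cmult (wt c s n) (RtoC (In c n (u t1)))) N) eventually (locally If)
  /\ is_RInt (V:=C_R_CompleteNormedModule) (FF c s t1) 0 1 If.
Proof.
  intros Hc.
  apply (filterlim_RInt (V:=C_R_CompleteNormedModule) (fun N => fN c s N t1) 0 1 eventually _ (FF c s t1)).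
  - intros N. apply fN_int; auto.
  - apply filterlim_locally. intros eps.
    destruct (epsN_lim c s Hc eps (cond_pos eps)) as [M HM]. exists M. intros N HN t.
    apply (norm_compat1 (K:=R_AbsRing) (V:=C_R_NormedModule)). rewrite normCR.
    change (Cmod (Cminus (fN c s N t1 t) (FF c s t1 t)) < eps).
    replace (Cminus (fN c s N t1 t) (FF c s t1 t)) with (Copp (Cminus (FF c s t1 t) (fN c s N t1 t))) by ring.
    rewrite Cmod_opp. eapply Rle_lt_trans. apply unif; auto. apply HM; auto.
Qed.

Definition Inn c s t1 := RInt (V:=C_R_CompleteNormedModule) (fun t2 => FF c s t1 t2) 0 1.

Lemma Inn_is c s t1 : 4 < c -> is_RInt (V:=C_R_CompleteNormedModule) (FF c s t1) 0 1 (Inn c s t1).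
Proof.
  intros Hc. destruct (inner_step c s t1 Hc) as [If [_ H]].
  unfold Inn. replace (RInt (V:=C_R_CompleteNormedModule) (fun t2 => FF c s t1 t2) 0 1) with If. exact H.
  symmetry. exact (is_RInt_unique (V:=C_R_CompleteNormedModule) _ _ _ _ H).
Qed.

Lemma outer_step c s : 4 < c -> exists Iz,
  filterlim (fun N => sum_n (fun n => Cmult (wt c s n) (RtoC (mm n / c^n))) N) eventually (locally Iz)
  /\ is_RInt (V:=C_R_CompleteNormedModule) (Inn c s) 0 1 Iz.
Proof.
  intros Hc.
  apply (filterlim_RInt (V:=C_R_CompleteNormedModule)
    (fun N t1 => sum_n (fun n => Cmult (wt c s n) (RtoC (In c n (u t1)))) N) 0 1 eventually _ (Inn c s)).
  - intros N. apply (is_RInt_Csum (fun n t1 => Cmult (wt c s n) (RtoC (In c n (u t1))))).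
    intros n. apply is_RInt_Cscal. apply term_outer; auto.
  - apply filterlim_locally. intros eps.
    destruct (epsN_lim c s Hc eps (cond_pos eps)) as [M HM]. exists M. intros N HN t.
    apply ball_sym. apply (norm_compat1 (K:=R_AbsRing) (V:=C_R_NormedModule)).
    assert (D := is_RInt_minus _ _ _ _ _ _ (Inn_is c s t Hc) (fN_int c s N t Hc)).
    assert (B := norm_RInt_le_const _ 0 1 _ (epsN c s N) (Rle_0_1) ltac:(intros x _; rewrite normCR; apply unif; auto) D).
    eapply Rle_lt_trans. exact B. specialize (HM N HN). lra.
Qed.

Fixpoint rpoch (a : R) (j : nat) : R := match j with O => 1 | S k => rpoch a k * (a + INR k) end.

Lemma poch_R a j : poch (RtoC a) j = RtoC (rpoch a j).
Proof. induction j; simpl. reflexivity. rewrite IHj, RtoC_mult, RtoC_plus. reflexivity. Qed.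

Lemma Cpow_R z j : Cpow (RtoC z) j = RtoC (z ^ j).
Proof. induction j; simpl. reflexivity. rewrite IHj, RtoC_mult. reflexivity. Qed.

Lemma rpoch_1 j : rpoch 1 j = INR (fact j).
Proof. induction j; simpl rpoch. reflexivity. rewrite IHj. rewrite fact_simpl, mult_INR, S_INR. ring. Qed.

Lemma rpoch_half j : rpoch (/2) j = INR (fact (2*j)) / (4^j * INR (fact j)).
Proof.
  induction j. simpl. field. simpl rpoch. rewrite IHj.
  replace (2 * S j)%nat with (S (S (2*j))) by lia.
  rewrite !fact_simpl, !mult_INR, !S_INR, mult_INR. simpl (INR 2). simpl pow.
  assert (H1 := INR_fact_neq_0 (2*j)). assert (H2 := INR_fact_neq_0 j).
  assert (0 <= INR j) by apply pos_INR. assert (0 < 4^j) by (apply pow_lt; lra).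
  field. repeat split; lra.
Qed.

Lemma cbn_S s n : cbinom_num s (S n) = Cmult (cbinom_num s n) (Cminus s (RtoC (INR n))).
Proof. reflexivity. Qed.
Lemma poch_S a n : poch a (S n) = Cmult (poch a n) (Cplus a (RtoC (INR n))).
Proof. reflexivity. Qed.

Lemma poch12 s j : Cmult (poch (Copp (Cdiv s (RtoC 2))) j) (poch (Cdiv (Cminus (RtoC 1) s) (RtoC 2)) j)
  = Cmult (cbinom_num s (2*j)) (RtoC (/ 4^j)).
Proof.
  induction j.
  - simpl. rewrite Rinv_1. ring.
  - replace (2 * S j)%nat with (S (S (2*j))) by lia. rewrite !poch_S, !cbn_S.
    replace (/ 4 ^ S j) with (/ 4 ^ j * / 4) by (rewrite <- Rinv_mult; f_equal; simpl; ring).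
    rewrite RtoC_mult.
    transitivity (Cmult (Cmult (poch (Copp (Cdiv s (RtoC 2))) j) (poch (Cdiv (Cminus (RtoC 1) s) (RtoC 2)) j))
      (Cmult (Cplus (Copp (Cdiv s (RtoC 2))) (RtoC (INR j))) (Cplus (Cdiv (Cminus (RtoC 1) s) (RtoC 2)) (RtoC (INR j))))).
    ring. rewrite IHj.
    rewrite S_INR, mult_INR. replace (INR 2) with 2 by (simpl; ring).
    rewrite !RtoC_plus, !RtoC_mult. rewrite (RtoC_inv 4) by lra.
    replace (RtoC 4) with (Cmult (RtoC 2) (RtoC 2)) by (rewrite <- RtoC_mult; f_equal; ring).
    assert (T : RtoC 2 <> RtoC 0) by (intro E; injection E; lra).
    field; auto.
Qed.

Lemma RtoC_nz x : x <> 0 -> RtoC x <> RtoC 0.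
Proof. intros H E. apply H. injection E. auto. Qed.

Lemma F32_eq c s j : 4 < c ->
  F32_term (Copp (Cdiv s (RtoC 2))) (Cdiv (Cminus (RtoC 1) s) (RtoC 2)) (RtoC (/ 2))
           (RtoC 1) (RtoC 1) (RtoC (16 / c ^ 2)) j
  = Cmult (Cmult (cbinom s (2 * j)%nat) (RtoC (/ c ^ (2 * j)%nat))) (RtoC (Binomial.C (2 * j)%nat j ^ 2)).
Proof.
  intros Hc. unfold F32_term, cbinom, Binomial.C.
  rewrite poch12, !poch_R, Cpow_R, rpoch_half, rpoch_1.
  replace (2*j - j)%nat with j by lia.
  assert (E16 : (16/c^2)^j = 4^j * 4^j / c^(2*j)).
  { unfold Rdiv. rewrite Rpow_mult_distr, pow_inv, pow_mult. replace 16 with (4*4) by ring.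
    rewrite Rpow_mult_distr. reflexivity. }
  rewrite E16.
  set (F := INR (fact j)). set (F2 := INR (fact (2*j))).
  assert (HF : F <> 0) by apply INR_fact_neq_0. assert (HF2 : F2 <> 0) by apply INR_fact_neq_0.
  assert (H4 : 4^j <> 0) by (apply pow_nonzero; lra). assert (Hc2 : c^(2*j) <> 0) by (apply pow_nonzero; lra).
  replace ((F2 / (F * F)) ^ 2) with (F2 * F2 * / (F * F * F * F)) by (field; auto).
  assert (P1 : F * F <> 0) by (apply Rmult_integral_contrapositive_currified; auto).
  assert (P2 : F * F * F * F <> 0) by (repeat apply Rmult_integral_contrapositive_currified; auto).
  assert (P3 : 4^j * F <> 0) by (apply Rmult_integral_contrapositive_currified; auto).
  rewrite !RtoC_div, !RtoC_inv, !RtoC_mult by auto.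
  assert (A1 := RtoC_nz _ HF). assert (A2 := RtoC_nz _ HF2). assert (A3 := RtoC_nz _ H4). assert (A4 := RtoC_nz _ Hc2).
  rewrite (RtoC_inv (F*F*F*F)) by exact P2. rewrite !RtoC_mult.
  match goal with |- ?l = ?r => change (@eq C l r) end.
  field. repeat split; auto.
Qed.

Lemma cexp_neq0 z : cexp z <> RtoC 0.
Proof.
  unfold cexp, RtoC. intros E. injection E as E1 E2.
  assert (P := exp_pos (Re z)). assert (T := sin2_cos2 (Im z)). unfold Rsqr in T.
  apply Rmult_integral in E1. apply Rmult_integral in E2.
  destruct E1 as [E1|E1]; [lra|]. destruct E2 as [E2|E2]; [lra|].
  rewrite E1, E2 in T. lra.
Qed.

Lemma even_series (w : nat -> C) l : is_series (V:=C_NormedModule) w l -> (forall j, w (S (2*j)) = RtoC 0) ->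
  is_series (V:=C_NormedModule) (fun j => w (2*j)%nat) l.
Proof.
  intros H Hz.
  assert (E : forall N, sum_n (fun j => w (2*j)%nat) N = sum_n w (2*N)).
  { induction N. rewrite !sum_O. reflexivity.
    replace (2 * S N)%nat with (S (S (2*N))) by lia.
    rewrite sum_Sn, IHN, !sum_Sn, Hz. replace (S (S (2*N))) with (2 * S N)%nat by lia.
    f_equal. symmetry. apply (plus_zero_r (G:=C_AbelianGroup)). }
  unfold is_series in *.
  apply filterlim_ext with (fun N => sum_n w (2*N)). intros N; rewrite E; reflexivity.
  apply (filterlim_comp _ _ _ (fun N => (2*N)%nat) (sum_n w) eventually eventually); [|exact H].
  intros P [M HM]. exists M. intros n Hn. apply HM. lia.
Qed.

Lemma Cmul_inv_cancel (K z : C) : K <> RtoC 0 -> z = Cmult K (Cmult (Cinv K) z).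
Proof. intros H. field. exact H. Qed.

Theorem part1 (c : R) (s : C) (hc : 4 < c) :
  exists S : C,
      is_series (V := C_NormedModule)
        (fun j : nat => Cmult (Cmult (cbinom s (2 * j)%nat) (RtoC (/ c ^ (2 * j)%nat)))
                              (RtoC (Binomial.C (2 * j)%nat j ^ 2))) S
      /\ zeta_mahler2 (Pc c) s = Cmult (rpowC c s) S.
Proof.
  destruct (outer_step c s hc) as [Iz [HL HI]].
  assert (Z : zeta_mahler2 (Pc c) s = Iz).
  { unfold zeta_mahler2. exact (is_RInt_unique (V:=C_R_CompleteNormedModule) _ _ _ _ HI). }
  assert (Kn : rpowC c s <> RtoC 0) by (rewrite rpowC_pos by lra; apply cexp_neq0).
  exists (Cmult (Cinv (rpowC c s)) Iz). split.
  2:{ rewrite Z. apply Cmul_inv_cancel. exact Kn. }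
  assert (S1 : is_series (V:=C_NormedModule) (fun n => Cmult (wt c s n) (RtoC (mm n / c^n))) Iz) by exact HL.
  apply (is_series_scal (K:=C_AbsRing) (V:=C_NormedModule) (Cinv (rpowC c s))) in S1.
  apply even_series in S1.
  - eapply is_series_ext; [|exact S1]. intros j. cbv beta.
    change (scal (Cinv (rpowC c s)) ?x) with (Cmult (Cinv (rpowC c s)) x).
    unfold wt. rewrite mm_even, cb_C. unfold Rdiv. rewrite !RtoC_mult. match goal with |- ?l = ?r => change (@eq C l r) end. field. exact Kn.
  - intros j. cbv beta. change (scal (Cinv (rpowC c s)) ?x) with (Cmult (Cinv (rpowC c s)) x).
    rewrite mm_odd. unfold Rdiv. rewrite Rmult_0_l. match goal with |- ?l = ?r => change (@eq C l r) end. ring.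
Qed.


Theorem theorem14 (c : R) (s : C) (hc : 4 < c) :
  (exists S : C,
      is_series (V := C_NormedModule)
        (fun j : nat => Cmult (Cmult (cbinom s (2 * j)%nat) (RtoC (/ c ^ (2 * j)%nat)))
                              (RtoC (Binomial.C (2 * j)%nat j ^ 2))) S
      /\ zeta_mahler2 (Pc c) s = Cmult (rpowC c s) S)
  /\
  (exists T : C,
      is_series (V := C_NormedModule)
        (F32_term (Copp (Cdiv s (RtoC 2))) (Cdiv (Cminus (RtoC 1) s) (RtoC 2)) (RtoC (/ 2))
                  (RtoC 1) (RtoC 1) (RtoC (16 / c ^ 2))) T
      /\ zeta_mahler2 (Pc c) s = Cmult (rpowC c s) T).
Proof.
  split.
  { apply part1; exact hc. }
  destruct (part1 c s hc) as [S [HS HZ]].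
  exists S. split; [|exact HZ].
  eapply is_series_ext; [|exact HS]. intros j. symmetry. apply F32_eq. exact hc.
Qed.
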